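(* For every integer $\mathcal A\ge 1$ and all widths $w_i\ge 1$ ($i=1,\dots,\mathcal A$), both $\mathcal F^{\text{poly}}_{\mathcal A}$ and $\mathcal F^{\text{DNN}}_{\mathcal A,\bm w}$ are closed under the fix-and-shift transformation: for every $f$ in the class and every $c\in\mathbb R$, the function $f_c(\bm x,z):=f(\bm x,c)+c-z$ (for $(\bm x,z)\in\mathbb R^p\times\mathbb R$) also belongs to the class.
   Context: The $\mathcal A$-th order polynomial space is $\mathcal F^{\text{poly}}_{\mathcal A}=\{f:\mathbb R^p\times\mathbb R\to\mathbb R\mid f(\bm x,z)=\sum_{0\le i_1+\dots+i_p+j\le\mathcal A}\alpha_{i_1,\dots,i_p,j}\,z^j\prod_{k=1}^p x_k^{i_k},\ \alpha_{i_1,\dots,i_p,j}\in\mathbb R\}$. The linear-augmented DNN space of depth $\mathcal A$ with widths $w_0=p+1,w_1,\dots,w_{\mathcal A},w_{\mathcal A+1}=1$ is $\mathcal F^{\text{DNN}}_{\mathcal A,\bm w}=\{f\mid f(\bm x,z)=l^{\text{aug}}((\bm x;z))+l_{\mathcal A}\circ\sigma\circ l_{\mathcal A-1}\circ\cdots\circ\sigma\circ l_0((\bm x;z))\}$, where $(\bm x;z)\in\mathbb R^{p+1}$ is the concatenated input, $l^{\text{aug}}(\bm u)=\bm W^{\text{aug}\top}\bm u$ with $\bm W^{\text{aug}}\in\mathbb R^{w_0}$ arbitrary, $l_i(\bm u)=\bm W_i\bm u+\bm b_i$ with arbitrary $\bm W_i\in\mathbb R^{w_{i+1}\times w_i}$,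 $\bm b_i\in\mathbb R^{w_{i+1}}$ for $i=0,\dots,\mathcal A$, and $\sigma$ is a fixed activation function applied coordinatewise (e.g., ReLU). *)

(* Defs.v *)
From mathcomp Require Import all_boot all_order all_algebra.
From mathcomp Require Import reals.
Set Implicit Arguments. Unset Strict Implicit. Unset Printing Implicit Defensive.
Import Order.TTheory GRing.Theory Num.Theory.
Local Open Scope ring_scope.

(* Exponents are bounded by A, so indexed by {ffun 'I_p -> 'I_A.+1} * 'I_A.+1. *)
Definition poly_space (R : realType) (p A : nat) (f : 'cV[R]_p -> R -> R) : Prop :=
  exists alpha : {ffun 'I_p -> 'I_A.+1} -> 'I_A.+1 -> R,
    forall (x : 'cV[R]_p) (z : R),
      f x z = \sum_(e : {ffun 'I_p -> 'I_A.+1})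
                \sum_(j : 'I_A.+1 | (\sum_(k < p) (e k : nat) + j <= A)%N)
                   alpha e j * z ^+ j * \prod_(k < p) x k 0 ^+ (e k).

Definition width (p : nat) (w : nat -> nat) (i : nat) : nat :=
  if i is 0 then (p + 1)%N else w i.

Definition concat_input (R : realType) (p : nat) (x : 'cV[R]_p) (z : R)
  : 'cV[R]_(p + 1) := col_mx x (const_mx z).

Fixpoint hidden (R : realType) (p : nat) (w : nat -> nat) (sigma : R -> R)
  (W : forall k, 'M[R]_(width p w k.+1, width p w k))
  (b : forall k, 'cV[R]_(width p w k.+1))
  (u : 'cV[R]_(p + 1)) (k : nat) : 'cV[R]_(width p w k) :=
  match k with
  | 0 => u
  | k'.+1 => map_mx sigma (W k' *m hidden sigma W b u k' + b k')
  end.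

(* Linear-augmented DNN space of depth A (layers l_0..l_A, l_A : R^{w_A} -> R). *)
Definition dnn_space (R : realType) (p A : nat) (w : nat -> nat) (sigma : R -> R)
  (f : 'cV[R]_p -> R -> R) : Prop :=
  exists (Waug : 'cV[R]_(p + 1))
         (W : forall k, 'M[R]_(width p w k.+1, width p w k))
         (b : forall k, 'cV[R]_(width p w k.+1))
         (WA : 'rV[R]_(width p w A)) (bA : R),
    forall (x : 'cV[R]_p) (z : R),
      f x z = (Waug^T *m concat_input x z) 0 0
              + ((WA *m hidden sigma W b (concat_input x z) A) 0 0 + bA).

Definition fix_shift (R : realType) (p : nat) (f : 'cV[R]_p -> R -> R) (c : R)
  : 'cV[R]_p -> R -> R := fun x z => f x c + c - z.

(* Main.v *)
Require Import Defs.
From mathcomp Require Import all_boot all_order all_algebra.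
From mathcomp Require Import reals.
From mathcomp Require Import lra.
Import Order.TTheory GRing.Theory Num.Theory.
Local Open Scope ring_scope.
Lemma poly_part (R : realType) (p A : nat) (f : 'cV[R]_p -> R -> R) : (1 <= A)%N -> poly_space A f ->
     forall c : R, poly_space A (fix_shift f c).
Proof.
move=> hA [alpha hf] c.
pose e0 : {ffun 'I_p -> 'I_A.+1} := [ffun => ord0].
pose cond (e : {ffun 'I_p -> 'I_A.+1}) (j : 'I_A.+1) := (\sum_(k < p) (e k : nat) + j <= A)%N.
pose S e := \sum_(j | cond e j) alpha e j * c ^+ j.
pose P (x : 'cV[R]_p) (e : {ffun 'I_p -> 'I_A.+1}) := \prod_(k < p) x k 0 ^+ (e k).
exists (fun e (j : 'I_A.+1) => if (j == 0 :> nat) then S e + (if e == e0 then c else 0)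
   else if (j == 1 :> nat) && (e == e0) then -1 else 0).
move=> x z.
have key : forall e, \sum_(j | cond e j) (if (j == 0 :> nat) then S e + (if e == e0 then c else 0)
   else if (j == 1 :> nat) && (e == e0) then -1 else 0) * z ^+ j * P x e
   = S e * P x e + (if e == e0 then c - z else 0).
  move=> e.
  have Pe0 : P x e0 = 1.
    by rewrite /P big1 // => k _; rewrite ffunE expr0.
  case: (leqP (\sum_(k < p) (e k : nat)) A) => he.
    have c0 : cond e ord0 by rewrite /cond addn0.
    rewrite (bigD1 ord0) //= expr0 mulr1.
    case: eqP => [-> | ne].
      have c1 : cond e0 (Ordinal (hA : (1 < A.+1)%N)).
        by rewrite /cond big1 // => k _; rewrite ffunE.
      rewrite (bigD1 (Ordinal (hA : (1 < A.+1)%N))) /=; last by rewrite c1.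
      rewrite big1 ?Pe0; first by rewrite expr1; lra.
      move=> j /andP [/andP [_ h0] h1].
      have -> : (j == 0 :> nat) = false by apply/negbTE; rewrite -(inj_eq val_inj) in h0.
      have -> : (j == 1 :> nat) = false by apply/negbTE; rewrite -(inj_eq val_inj) in h1.
      by rewrite /= !mul0r.
    rewrite big1; first by rewrite addr0; lra.
    move=> j /andP [_ h0].
    have -> : (j == 0 :> nat) = false by apply/negbTE; rewrite -(inj_eq val_inj) in h0.
    by rewrite andbF !mul0r.
  have Hc : forall j, ~~ cond e j.
    move=> j; rewrite /cond -ltnNge; exact: (leq_trans he (leq_addr _ _)).
  have ne : e != e0.
    apply/eqP => E; move: he; rewrite E big1 //; last by move=> k _; rewrite ffunE.
  rewrite (negbTE ne) /S !big_pred0 //; first by rewrite mul0r addr0.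
    by move=> j; apply/negbTE.
  by move=> j; apply/negbTE.
rewrite /fix_shift hf.
under [RHS]eq_bigr do rewrite key.
rewrite big_split /= -big_mkcond big_pred1_eq.
rewrite -addrA; congr (_ + _).
by apply: eq_bigr => e _; rewrite /S mulr_suml.
Qed.

Section S.
Variables (R : realType) (p A : nat) (w : nat -> nat) (sigma : R -> R).

Lemma dnn_part (f : 'cV[R]_p -> R -> R) : (1 <= A)%N -> dnn_space A w sigma f ->
     forall c : R, dnn_space A w sigma (fix_shift f c).
Proof.
move=> hA [Waug [W [b [WA [bA hf]]]]] c.
pose W0 : 'M[R]_(width p w 1, p + 1) := W 0%N.
pose W' := fun k => match k return 'M[R]_(width p w k.+1, width p w k) with
  | 0%N => row_mx (lsubmx W0) 0
  | k'.+1 => W k'.+1 end.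
pose b' := fun k => match k return 'cV[R]_(width p w k.+1) with
  | 0%N => b 0%N + rsubmx W0 *m const_mx c
  | k'.+1 => b k'.+1 end.
exists (col_mx (usubmx Waug) (const_mx (-1))), W', b', WA,
  (bA + ((dsubmx Waug)^T *m (const_mx c : 'cV[R]_1)) 0 0 + c).
move=> x z.
have hid : forall k, hidden sigma W' b' (concat_input x z) k.+1 =
                     hidden sigma W b (concat_input x c) k.+1.
  elim=> [|k IH].
    rewrite /= /concat_input /W0.
    rewrite [W 0%N *m _](_ : _ = lsubmx (W 0%N) *m x + rsubmx (W 0%N) *m const_mx c);
      last by rewrite -{1}(hsubmxK (W 0%N)) mul_row_col.
    by rewrite mul_row_col mul0mx addr0 [b 0%N + _]addrC addrA.
  change (map_mx sigma (W' k.+1 *m hidden sigma W' b' (concat_input x z) k.+1 + b' k.+1) = map_mx sigma (W k.+1 *m hidden sigma W b (concat_input x c) k.+1 + b k.+1)).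
  by rewrite IH.
rewrite /fix_shift hf.
have := hid A.-1; rewrite prednK // => ->.
rewrite /concat_input -{1}(vsubmxK Waug) !tr_col_mx !mul_row_col !mxE.
rewrite [\sum_j (const_mx (-1))^T 0 j * _]big_ord1 !mxE.
rewrite mulN1r. set s1 := \sum_j _ * x j 0. set s2 := \sum_j _ * const_mx c j 0.
set s3 := \sum_j _ * _. lra.
Qed.
End S.

Theorem lemma2 (R : realType) (p A : nat) (w : nat -> nat) (sigma : R -> R) :
  (1 <= A)%N ->
  (forall i : nat, (1 <= i <= A)%N -> (1 <= w i)%N) ->
  (forall (f : 'cV[R]_p -> R -> R), poly_space A f ->
     forall c : R, poly_space A (fix_shift f c)) /\
  (forall (f : 'cV[R]_p -> R -> R), dnn_space A w sigma f ->
     forall c : R, dnn_space A w sigma (fix_shift f c)).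
Proof.
move=> hA _; split=> f hf c.
  exact: poly_part.
exact: dnn_part.
Qed.
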